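(* Let $M_{2,2}$ be the lattice obtained from $A_1^{\oplus 12}=\langle v_1,\dots,v_{12}\rangle$ ($v_i^2=-2$, $v_i\cdot v_j=0$ for $i\ne j$) by adding the generators $(v_1+\dots+v_8)/2$ and $(v_5+\dots+v_{12})/2$, with discriminant group $A_{M_{2,2}}$ and discriminant form $q:A_{M_{2,2}}\to\mathbb Q/2\mathbb Z$. Consider the equivalence relation on $A_{M_{2,2}}$ where $r\sim s$ if $\bar\psi(r)=s$ for the isometry $\bar\psi$ of $A_{M_{2,2}}$ induced by some $\psi\in O(M_{2,2})$. Then the non-trivial equivalence classes, recorded as triples (order of the element, value of $q$, cardinality of the class), are exactly: $(2,0,54)$, $(2,0,1)$, $(2,1/2,64)$, $(2,1,54)$, $(2,1,18)$, $(2,3/2,64)$.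
   Context: For an even lattice $S$, $A_S=S^\vee/S$ and $q_S(x+S)=x^2\bmod 2\mathbb Z$. The lattice $M_{2,2}$ is the exceptional lattice of the symplectic action of $(\mathbb Z/2\mathbb Z)^2$ on a K3 surface (the minimal primitive sublattice of the second cohomology of the resolved quotient containing the 12 exceptional curves). *)

(* Defs.v *)
From HB Require Import structures.
From mathcomp Require Import all_boot all_order all_algebra.
Set Implicit Arguments. Unset Strict Implicit. Unset Printing Implicit Defensive.
Import Order.TTheory GRing.Theory Num.Theory.
Local Open Scope ring_scope.

(* Ambient space Q^12 (row vectors); v_i is the i-th standard basis vector. *)
Notation vec := 'rV[rat]_12.

Definition bf (x y : vec) : rat := - 2 * (x *m y^T) 0 0.

Definition isZ (r : rat) : Prop := exists z : int, r = z%:~R.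

(* h1 = (v1+...+v8)/2 (indices 0..7), h2 = (v5+...+v12)/2 (indices 4..11). *)
Definition h1 : vec := \row_(j < 12) (if (j < 8)%N then 1/2 else 0).
Definition h2 : vec := \row_(j < 12) (if (4 <= j)%N then 1/2 else 0).

Definition inM (x : vec) : Prop :=
  exists (a : 'rV[int]_12) (c1 c2 : int),
    x = map_mx (fun z : int => z%:~R) a + c1%:~R *: h1 + c2%:~R *: h2.

Definition inDual (x : vec) : Prop := forall m, inM m -> isZ (bf x m).

(* Isometries of M_{2,2}, via their (unique) Q-linear extension to
   Q^12 = Q (x) M, acting on row vectors by x |-> x *m g. *)
Definition isometryM (g : 'M[rat]_12) : Prop :=
  [/\ g \in unitmx,
      (forall x y, bf (x *m g) (y *m g) = bf x y),
      (forall x, inM x -> inM (x *m g)) &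
      (forall x, inM x -> exists y, inM y /\ y *m g = x)].

(* r ~ s in A_M : some psi in O(M) has bar(psi)(r + M) = s + M. *)
Definition equivA (x y : vec) : Prop :=
  exists g, isometryM g /\ inM (x *m g - y).

Definition orderA (x : vec) (k : nat) : Prop :=
  [/\ (0 < k)%N, inM (k%:R *: x) &
      forall j : nat, (0 < j < k)%N -> ~ inM (j%:R *: x)].

(* q(x + M) = v in Q/2Z. *)
Definition qA (x : vec) (v : rat) : Prop := isZ ((bf x x - v) / 2).

(* A set P of elements of M^vee (saturated under congruence mod M) has
   exactly n classes mod M, i.e. defines a subset of A_M of cardinality n. *)
Definition cardA (P : vec -> Prop) (n : nat) : Prop :=
  exists s : 'I_n -> vec,
    [/\ (forall i, P (s i)),
        (forall i j, inM (s i - s j) -> i = j) &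
        (forall x, P x -> exists i, inM (x - s i))].

Definition M22_table : seq (nat * rat * nat) :=
  [:: (2%N, 0, 54%N); (2%N, 0, 1%N); (2%N, 1/2, 64%N);
      (2%N, 1, 54%N); (2%N, 1, 18%N); (2%N, 3/2, 64%N)].

(* Main.v *)
Require Import Defs.
From HB Require Import structures.
From mathcomp Require Import all_boot all_order all_algebra zify ring lra.
Import Order.TTheory GRing.Theory Num.Theory.
Set Implicit Arguments. Unset Strict Implicit. Unset Printing Implicit Defensive.
Local Open Scope ring_scope.
Definition par (z : int) : bool := (z %% 2)%Z != 0.
Ltac pcase x := case: (@eqP _ (x %% 2)%Z 0) => ?.
Lemma parD a b : par (a + b) = par a (+) par b.
Proof. rewrite /par; pcase a; pcase b; pcase (a+b); simpl; lia. Qed.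
Lemma parM a b : par (a * b) = par a && par b.
Proof. rewrite /par; pcase a; pcase b; pcase (a*b); simpl; nia. Qed.
Lemma parN a : par (- a) = par a.
Proof. rewrite /par; pcase a; pcase (-a); simpl; lia. Qed.
Lemma parB a b : par (a - b) = par a (+) par b.
Proof. by rewrite parD parN. Qed.
Lemma par_sq a : ((par a : nat)%:Z) <= a * a.
Proof. rewrite /par; pcase a; simpl; nia. Qed.
Lemma par0 : par 0 = false. Proof. by []. Qed.
Lemma par_b (b : bool) : par ((b : nat)%:Z) = b. Proof. by case: b. Qed.
Lemma par2 a : par (2 * a) = false. Proof. by rewrite parM. Qed.
Lemma par_even a : ~~ par a -> a = 2 * (a %/ 2)%Z.
Proof. rewrite /par negbK => /eqP; lia. Qed.

Lemma isZP r : isZ r <-> denq r = 1.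
Proof.
split; first by case=> z ->; rewrite denq_int.
move=> h; exists (numq r); by rewrite numqE h mulr1.
Qed.

Lemma isZ_int (z : int) : isZ (z%:~R). Proof. by exists z. Qed.
Lemma isZD a b : isZ a -> isZ b -> isZ (a + b).
Proof. by case=> x -> [y ->]; exists (x + y); rewrite rmorphD. Qed.
Lemma isZM a b : isZ a -> isZ b -> isZ (a * b).
Proof. by case=> x -> [y ->]; exists (x * y); rewrite rmorphM. Qed.
Lemma isZN a : isZ a -> isZ (- a).
Proof. by case=> x ->; exists (- x); rewrite rmorphN. Qed.
Lemma isZNE a : isZ (- a) <-> isZ a.
Proof. by split=> /isZN //; rewrite opprK. Qed.

Lemma isZ_half (S : int) : isZ ((S%:~R : rat) / 2) <-> ~~ par S.
Proof.
split.
- case=> z /(congr1 (fun r => r * 2)); rewrite divfK // => h.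
  have : S = z * 2 by apply: (@intr_inj rat); rewrite h rmorphM.
  by move->; rewrite mulrC par2.
- move/par_even => h; exists (S %/ 2)%Z; rewrite {1}h rmorphM /=.
  by field.
Qed.
Definition half (y : 'rV[int]_12) : vec := (1/2 : rat) *: map_mx (fun z : int => z%:~R) y.
Definition pat (y : 'rV[int]_12) : seq bool := [seq par (y 0 (inord k)) | k <- iota 0 12].
Definition vof (p : seq bool) : 'rV[int]_12 := \row_(j < 12) ((nth false p j : nat)%:Z).
Definition dotp (p q : seq bool) : bool :=
  foldr addb false [seq nth false p k && nth false q k | k <- iota 0 12].
Definition dotc (p q : seq bool) : nat :=
  count id [seq nth false p k && nth false q k | k <- iota 0 12].
Definition xorp (p q : seq bool) : seq bool := [seq nth false p k (+) nth false q k | k <- iota 0 12].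

Lemma halfE y j : half y 0 j = (y 0 j)%:~R / 2.
Proof. by rewrite /half !mxE mulrC mul1r. Qed.

Lemma half_inj : injective half.
Proof.
move=> a b h; apply/matrixP => i j; rewrite (ord1 i).
have : half a 0 j = half b 0 j by rewrite h.
rewrite !halfE.
move/(congr1 (fun r => r * 2)); rewrite !divfK // => /(@intr_inj rat). done.
Qed.

Lemma halfD a b : half a + half b = half (a + b).
Proof. by apply/matrixP => i j; rewrite !mxE rmorphD mulrDr. Qed.
Lemma halfB a b : half a - half b = half (a - b).
Proof. by apply/matrixP => i j; rewrite !mxE rmorphB mulrBr. Qed.

Lemma size_pat y : size (pat y) = 12%N. Proof. by rewrite size_map size_iota. Qed.

Lemma nth_pat y k : (k < 12)%N -> nth false (pat y) k = par (y 0 (inord k)).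
Proof. by move=> hk; rewrite (nth_map 0%N) ?size_iota // nth_iota. Qed.

Lemma vofE p k : (k < 12)%N -> vof p 0 (inord k) = (nth false p k : nat)%:Z.
Proof. by move=> hk; rewrite mxE inordK. Qed.

Lemma pat_vof p : size p = 12%N -> pat (vof p) = p.
Proof.
move=> hs; apply: (@eq_from_nth _ false); first by rewrite size_pat hs.
move=> k; rewrite size_pat => hk; by rewrite nth_pat // vofE // par_b.
Qed.

Lemma pat_add a b : pat (a + b) = xorp (pat a) (pat b).
Proof.
apply/eq_in_map => k; rewrite mem_iota /= => hk.
by rewrite mxE parD !nth_pat.
Qed.

Lemma pat_sub a b : pat (a - b) = xorp (pat a) (pat b).
Proof.
apply/eq_in_map => k; rewrite mem_iota /= => hk.
by rewrite !mxE parB !nth_pat.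
Qed.

Lemma big12 (R : Type) (idx : R) (op : Monoid.law idx) (F : 'I_12 -> R) :
  \big[op/idx]_(j < 12) F j = foldr op idx [seq F (inord k) | k <- iota 0 12].
Proof.
rewrite (eq_bigr (fun j : 'I_12 => F (inord (val j)))); last by move=> j _; rewrite inord_val.
rewrite -(big_mkord xpredT (fun k => F (inord k))) /index_iota subn0.
by rewrite foldrE big_map.
Qed.

Lemma bfE x y : bf x y = -2 * \sum_(j < 12) x 0 j * y 0 j.
Proof. by rewrite /bf mxE; congr (_ * _); apply: eq_bigr => j _; rewrite mxE. Qed.

Lemma bf_half a b : bf (half a) (half b) = - ((\sum_(j < 12) a 0 j * b 0 j)%:~R) / 2.
Proof.
rewrite bfE rmorph_sum /= mulr_sumr mulNr mulr_suml -sumrN; apply: eq_bigr => j _.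
rewrite !halfE rmorphM /=; by field.
Qed.

Lemma par_sum (F : 'I_12 -> int) : par (\sum_j F j) = \big[addb/false]_j par (F j).
Proof. by apply: (big_morph par parD). Qed.

Lemma par_dot (a b : 'rV[int]_12) : par (\sum_(j < 12) a 0 j * b 0 j) = dotp (pat a) (pat b).
Proof.
rewrite par_sum big12 /dotp; congr (foldr _ _ _).
apply/eq_in_map => k; rewrite mem_iota /= => hk.
by rewrite parM !nth_pat.
Qed.

Lemma isZ_bf_half a b : isZ (bf (half a) (half b)) <-> ~~ dotp (pat a) (pat b).
Proof. by rewrite bf_half mulNr isZNE isZ_half par_dot. Qed.

Lemma fold_count (s : seq nat) (f : nat -> bool) :
  foldr +%R (0 : int) [seq ((f k : nat)%:Z) | k <- s] = (count f s)%:Z.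
Proof. elim: s => //= a s ->; by rewrite PoszD. Qed.

Lemma sum_vof p q : \sum_(j < 12) vof p 0 j * vof q 0 j = (dotc p q)%:Z.
Proof.
rewrite big12 /dotc count_map -fold_count; congr (foldr _ _ _).
apply/eq_in_map => k; rewrite mem_iota /= => hk.
by rewrite !vofE //; case: (nth false p k); case: (nth false q k).
Qed.

Lemma bf_vof p q : bf (half (vof p)) (half (vof q)) = - (((dotc p q)%:Z)%:~R) / 2.
Proof. by rewrite bf_half sum_vof. Qed.

Lemma sq_count (z : 'rV[int]_12) : ((count id (pat z))%:Z) <= \sum_(j < 12) z 0 j * z 0 j.
Proof.
apply: (@le_trans _ _ (\sum_(j < 12) ((par (z 0 j) : nat)%:Z))); last first.
  by apply: ler_sum => j _; apply: par_sq.
rewrite big12 /pat count_map -fold_count. by [].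
Qed.
Definition comb (b1 b2 : bool) : seq bool :=
  [seq (b1 && (k < 8)%N) (+) (b2 && (4 <= k)%N) | k <- iota 0 12].
Definition inC (p : seq bool) : bool :=
  [|| p == comb false false, p == comb true false, p == comb false true | p == comb true true].
Definition combos : seq (bool * bool) := [:: (false,false); (true,false); (false,true); (true,true)].
Definition perp (p : seq bool) : bool := all (fun bb => ~~ dotp p (comb bb.1 bb.2)) combos.

Lemma inC_comb b1 b2 : inC (comb b1 b2).
Proof. by case: b1; case: b2; rewrite /inC eqxx ?orbT. Qed.

Lemma inCP p : inC p -> exists b1 b2, p = comb b1 b2.
Proof. by rewrite /inC => /or4P [] /eqP ->; do 2 eexists. Qed.

Lemma size_comb b1 b2 : size (comb b1 b2) = 12%N.
Proof. by rewrite size_map size_iota. Qed.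

Lemma nth_comb b1 b2 k : (k < 12)%N ->
  nth false (comb b1 b2) k = (b1 && (k < 8)%N) (+) (b2 && (4 <= k)%N).
Proof. by move=> hk; rewrite (nth_map 0%N) ?size_iota // nth_iota. Qed.

Lemma inM0 : inM 0.
Proof. exists 0, 0, 0; by rewrite map_mx0 !scale0r !addr0. Qed.

Lemma inMD x y : inM x -> inM y -> inM (x + y).
Proof.
case=> a [c1 [c2 ->]] [a' [c1' [c2' ->]]].
exists (a + a'), (c1 + c1'), (c2 + c2').
apply/matrixP => i j; rewrite !mxE !rmorphD /=; ring.
Qed.

Lemma inMN x : inM x -> inM (- x).
Proof.
case=> a [c1 [c2 ->]]; exists (- a), (- c1), (- c2).
by rewrite map_mxN !rmorphN /= !scaleNr !opprD.
Qed.

Lemma inMB x y : inM x -> inM y -> inM (x - y).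
Proof. by move=> hx hy; apply: inMD => //; apply: inMN. Qed.

Lemma inM_char1 x : inM x -> exists y, x = half y /\ inC (pat y).
Proof.
case=> a [c1 [c2 ->]].
pose y := \row_(j < 12) (2 * a 0 j + c1 * ((j < 8)%N : nat)%:Z + c2 * ((4 <= j)%N : nat)%:Z).
exists y; split.
- apply/matrixP => i j; rewrite (ord1 i) halfE !mxE.
  case: (j < 8)%N; case: (4 <= j)%N; rewrite /= !rmorphD !rmorphM /=; by field.
- suff -> : pat y = comb (par c1) (par c2) by apply: inC_comb.
  apply/eq_in_map => k; rewrite mem_iota /= => hk.
  by rewrite mxE !parD par2 !parM !par_b inordK.
Qed.

Lemma inM_char2 y : inC (pat y) -> inM (half y).
Proof.
case/inCP => b1 [b2 hp].
pose s (j : 'I_12) : int := ((b1 && (j < 8)%N) : nat)%:Z + ((b2 && (4 <= j)%N) : nat)%:Z.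
have hpar : forall j : 'I_12, ~~ par (y 0 j - s j).
  move=> j; rewrite parB parD !par_b.
  have := congr1 (fun p => nth false p j) hp; rewrite /= nth_pat // nth_comb // inord_val => ->.
  by case: (b1 && _); case: (b2 && _).
exists (\row_(j < 12) (divz (y 0 j - s j) 2)), b1%:Z, b2%:Z.
apply/matrixP => i j; rewrite (ord1 i) halfE !mxE.
have e := par_even (hpar j).
set d := divz (y 0 j - s j) 2.
have ey : y 0 j = 2 * d + s j by rewrite /d -e; ring.
rewrite ey; clearbody d; rewrite /s; clear e ey hpar hp s.
case: b1; case: b2; case: (j < 8)%N; case: (4 <= j)%N;
  rewrite /= !rmorphD !rmorphM /=; by field.
Qed.

Lemma half_vof_inM p : inC p -> size p = 12%N -> inM (half (vof p)).
Proof. by move=> h hs; apply: inM_char2; rewrite pat_vof. Qed.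

Lemma notM_vof p : size p = 12%N -> ~~ inC p -> ~ inM (half (vof p)).
Proof.
move=> hs hC /inM_char1 [y [/half_inj e hy]].
by move: hy; rewrite -e pat_vof // (negbTE hC).
Qed.

Lemma dual_char2 y : perp (pat y) -> inDual (half y).
Proof.
move=> hp m /inM_char1 [y' [-> /inCP [b1 [b2 e]]]].
apply/isZ_bf_half; rewrite e.
by move/allP: hp => /(_ (b1, b2)); apply; clear e; case: b1; case: b2.
Qed.

Lemma bf_delta x j : bf x (map_mx (fun z : int => z%:~R) (delta_mx 0 j)) = -2 * x 0 j.
Proof.
rewrite bfE (bigD1 j) //= big1 ?addr0; first by rewrite !mxE !eqxx /= mulr1.
by move=> k hk; rewrite !mxE eqxx /= (negbTE hk) mulr0.
Qed.

Lemma dual_char1 x : inDual x -> exists y, x = half y /\ perp (pat y).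
Proof.
move=> hx.
have hZ : forall j : 'I_12, (2 * x 0 j) = (numq (2 * x 0 j))%:~R.
  move=> j; have : isZ (bf x (map_mx (fun z : int => z%:~R) (delta_mx 0 j))).
    apply: hx; exists (delta_mx 0 j), 0, 0; by rewrite !scale0r !addr0.
  rewrite bf_delta mulNr isZNE => /isZP h.
  by rewrite numqE h mulr1.
exists (\row_(j < 12) numq (2 * x 0 j)).
have ex : x = half (\row_(j < 12) numq (2 * x 0 j)).
  apply/matrixP => i j; rewrite (ord1 i) halfE mxE -hZ; by field.
split=> //.
apply/allP => -[b1 b2] _ /=.
have hm : inM (half (vof (comb b1 b2))) by apply: half_vof_inM; [apply: inC_comb | apply: size_comb].
have := hx _ hm; rewrite {1}ex => /isZ_bf_half.
by rewrite pat_vof ?size_comb.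
Qed.
Lemma bfC x y : bf x y = bf y x.
Proof. by rewrite !bfE; congr (_ * _); apply: eq_bigr => j _; rewrite mulrC. Qed.
Lemma bfDl x y z : bf (x + y) z = bf x z + bf y z.
Proof. by rewrite !bfE -mulrDr -big_split /=; congr (_ * _); apply: eq_bigr => j _; rewrite mxE mulrDl. Qed.
Lemma bfDr x y z : bf z (x + y) = bf z x + bf z y.
Proof. by rewrite bfC bfDl !(bfC z). Qed.
Lemma bfZl c x z : bf (c *: x) z = c * bf x z.
Proof.
rewrite !bfE mulrCA [c * _]mulr_sumr; congr (_ * _); apply: eq_bigr => j _.
by rewrite mxE mulrA.
Qed.
Lemma bfZr c x z : bf z (c *: x) = c * bf z x.
Proof. by rewrite bfC bfZl bfC. Qed.
Lemma bfNl x z : bf (- x) z = - bf x z.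
Proof. by rewrite -scaleN1r bfZl mulN1r. Qed.
Lemma bfBl x y z : bf (x - y) z = bf x z - bf y z.
Proof. by rewrite bfDl bfNl. Qed.

Lemma iso_bf g x y : isometryM g -> bf (x *m g) (y *m g) = bf x y.
Proof. by case. Qed.
Lemma iso_unit g : isometryM g -> g \in unitmx.
Proof. by case. Qed.
Lemma iso_M g x : isometryM g -> inM x -> inM (x *m g).
Proof. by case=> _ _ h _; apply: h. Qed.

Lemma iso_inv g : isometryM g -> isometryM (invmx g).
Proof.
move=> hg; have hu := iso_unit hg; split.
- by rewrite unitmx_inv.
- by move=> x y; rewrite -(iso_bf _ _ hg) !mulmxKV.
- move=> x hx; case: hg => _ _ _ /(_ x hx) [y [hy <-]]; by rewrite mulmxK.
- move=> x hx; exists (x *m g); split; [by apply: iso_M | by rewrite mulmxK].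
Qed.

Lemma iso_Minv g x : isometryM g -> inM x -> inM (x *m invmx g).
Proof. by move=> hg; apply: iso_M; apply: iso_inv. Qed.

Lemma iso_mul g h : isometryM g -> isometryM h -> isometryM (g *m h).
Proof.
move=> hg hh; split.
- by rewrite unitmx_mul (iso_unit hg) (iso_unit hh).
- by move=> x y; rewrite !mulmxA (iso_bf _ _ hh) (iso_bf _ _ hg).
- by move=> x hx; rewrite mulmxA; apply: iso_M => //; apply: iso_M.
- move=> x hx; case: hh => _ _ _ /(_ x hx) [y1 [hy1 <-]].
  case: hg => _ _ _ /(_ y1 hy1) [y2 [hy2 <-]].
  by exists y2; rewrite mulmxA.
Qed.

Lemma equivA_sym x y : equivA x y -> equivA y x.
Proof.
case=> g [hg hm]; exists (invmx g); split; first by apply: iso_inv.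
have := iso_Minv hg (inMN hm).
by rewrite mulNmx mulmxBl mulmxK ?(iso_unit hg) // opprB.
Qed.

Lemma equivA_trans x y z : equivA x y -> equivA y z -> equivA x z.
Proof.
case=> g1 [h1 m1] [g2 [h2 m2]]; exists (g1 *m g2); split; first by apply: iso_mul.
have := inMD (iso_M h2 m1) m2; by rewrite mulmxBl mulmxA addrA subrK.
Qed.

Lemma equivA_M x y z : equivA x y -> inM (y - z) -> equivA x z.
Proof.
case=> g [hg hm] hyz; exists g; split=> //.
by have := inMD hm hyz; rewrite addrA subrK.
Qed.

Lemma dual_iso g x : isometryM g -> inDual x -> inDual (x *m g).
Proof.
move=> hg hx m hm; case: (hg) => _ _ _ /(_ m hm) [y [hy <-]].
by rewrite iso_bf //; apply: hx.
Qed.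

Lemma bf_int_half (a : 'rV[int]_12) y :
  bf (map_mx (fun z : int => z%:~R) a) (half y) = - (\sum_(j < 12) a 0 j * y 0 j)%:~R.
Proof.
rewrite bfE rmorph_sum /= mulr_sumr -sumrN; apply: eq_bigr => j _.
rewrite halfE !mxE rmorphM /=; by field.
Qed.

Lemma bf_int_int (a : 'rV[int]_12) :
  bf (map_mx (fun z : int => z%:~R) a) (map_mx (fun z : int => z%:~R) a)
  = 2 * (- (\sum_(j < 12) a 0 j * a 0 j)%:~R).
Proof.
rewrite bfE rmorph_sum /= mulrN -mulNr; congr (_ * _); apply: eq_bigr => j _.
by rewrite !mxE rmorphM.
Qed.

Definition w12 := comb true false.
Definition w23 := comb false true.

Lemma h1E : h1 = half (vof w12).
Proof.
apply/matrixP => i j; rewrite (ord1 i) halfE !mxE nth_comb //.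
by case: (j < 8)%N; rewrite /= ?mul1r ?mul0r.
Qed.
Lemma h2E : h2 = half (vof w23).
Proof.
apply/matrixP => i j; rewrite (ord1 i) halfE !mxE nth_comb //.
by case: (3 < j)%N; rewrite /= ?mul1r ?mul0r.
Qed.

Lemma M_even m : inM m -> isZ (bf m m / 2).
Proof.
case=> a [c1 [c2 ->]].
rewrite !bfDl !bfDr !bfZl !bfZr !(bfC h1 (map_mx _ a)) !(bfC h2 (map_mx _ a)) (bfC h2 h1).
rewrite bf_int_int h1E h2E !bf_int_half !bf_vof.
have -> : dotc w12 w12 = 8%N by vm_compute.
have -> : dotc w23 w23 = 8%N by vm_compute.
have -> : dotc w12 w23 = 4%N by vm_compute.
move: (\sum_(j < 12) a 0 j * a 0 j) (\sum_(j < 12) a 0 j * vof w12 0 j) (\sum_(j < 12) a 0 j * vof w23 0 j) => u v w.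
rewrite (_ : _ / 2 = (- u%:~R) + c1%:~R * (- v%:~R) + c2%:~R * (- w%:~R)
   + c1%:~R * c1%:~R * (-2) + c2%:~R * c2%:~R * (-2) + c1%:~R * c2%:~R * (-2)); last first.
  rewrite (_ : ((8%N)%:Z)%:~R = 8 :> rat) // (_ : ((4%N)%:Z)%:~R = 4 :> rat) //; by field.
have hm2 : isZ (2 : rat) by exists 2.
by repeat apply: isZD; repeat apply: isZM; rewrite ?isZNE; apply: isZ_int || apply: hm2.
Qed.
Lemma q_inv x y : inDual y -> equivA x y -> isZ ((bf y y - bf x x) / 2).
Proof.
move=> hy [g [hg hm]].
have e : x *m g = y + (x *m g - y) by rewrite addrC subrK.
move: hm; move: (x *m g - y) e => m e hm.
rewrite -(iso_bf x x hg) e bfDl !bfDr (bfC m y).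
rewrite (_ : _ / 2 = - bf y m - bf m m / 2); last by field.
apply: isZD; apply: isZN; [by apply: hy | by apply: M_even].
Qed.

Definition Char x := forall z, inDual z -> isZ (bf z z - bf x z).

Lemma Char_inv x y : equivA x y -> Char x -> Char y.
Proof.
move=> [g [hg hm]] hx z hz.
set z' := z *m invmx g.
have hz' : inDual z' by apply: dual_iso => //; apply: iso_inv.
have ez : z = z' *m g by rewrite /z' mulmxKV ?iso_unit.
have e1 : bf z z = bf z' z' by rewrite ez iso_bf.
have e2 : bf (x *m g) z = bf x z' by rewrite ez iso_bf.
have e3 := bfBl (x *m g) y z.
have -> : bf z z - bf y z = (bf z' z' - bf x z') + bf z (x *m g - y).
  by rewrite (bfC z) e3 e1 -e2; ring.
apply: isZD; [by apply: hx | by apply: hz].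
Qed.

Definition ones : seq bool := nseq 12 true.
Definition u := half (vof ones).

Lemma dotp_ones p : dotp ones p = dotp p p.
Proof.
rewrite /dotp; congr (foldr _ _ _); apply/eq_in_map => k; rewrite mem_iota /= => hk.
by rewrite nth_nseq hk andbb.
Qed.

Lemma Char_u : Char u.
Proof.
move=> z /dual_char1 [y [-> _]].
rewrite /u !bf_half.
set S1 := \sum_(j < 12) y 0 j * y 0 j.
set S2 := \sum_(j < 12) vof ones 0 j * y 0 j.
rewrite (_ : - S1%:~R / 2 - - S2%:~R / 2 = (S2 - S1)%:~R / 2); last by rewrite rmorphB /=; field.
by apply/isZ_half; rewrite parB !par_dot pat_vof // dotp_ones addbb.
Qed.

Lemma N_inv x y m v : equivA x y -> inM m -> bf (x + m) (x + m) = v ->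
  exists m', inM m' /\ bf (y + m') (y + m') = v.
Proof.
move=> [g [hg hm0]] hm hv; exists ((x *m g - y) + m *m g); split.
  by apply: inMD => //; apply: iso_M.
have -> : y + (x *m g - y + m *m g) = (x + m) *m g by rewrite mulmxDl addrA [y + _]addrC subrK.
by rewrite iso_bf.
Qed.

Lemma no_norm p : size p = 12%N ->
  all (fun bb => 3 <= count id (xorp p (comb bb.1 bb.2)))%N combos ->
  forall m, inM m -> bf (half (vof p) + m) (half (vof p) + m) <> -1.
Proof.
move=> hs hall m /inM_char1 [y' [-> /inCP [b1 [b2 e]]]].
rewrite halfD bf_half => h.
set S := \sum_(j < 12) _ in h.
have hS : (S%:~R : rat) = (2%:Z)%:~R.
  have -> : (S%:~R : rat) = - (- S%:~R / 2) * 2 by field.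
  by rewrite h.
move/(@intr_inj rat): hS => hS.
have := sq_count (vof p + y'); rewrite -/S hS pat_add pat_vof // e.
have : (3 <= count id (xorp p (comb b1 b2)))%N.
  by move/allP: hall => /(_ (b1, b2)); apply; clear e; case: b1; case: b2.
lia.
Qed.
Definition gm (t : seq nat) : 'M[rat]_12 :=
  \matrix_(i < 12, j < 12) (((i : nat) == nth 0%N t j) : nat)%:R.
Definition reidx (t : seq nat) (y : 'rV[int]_12) : 'rV[int]_12 :=
  \row_(j < 12) y 0 (inord (nth 0%N t j)).
Definition permute (p : seq bool) (t : seq nat) : seq bool :=
  [seq nth false p (nth 0%N t k) | k <- iota 0 12].
Definition tinv (t : seq nat) : seq nat := [seq index k t | k <- iota 0 12].
Definition good (t : seq nat) : bool :=
  all (fun bb => inC (permute (comb bb.1 bb.2) t)) combos.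
Definition lt12 (t : seq nat) : bool := all (fun k => k < 12)%N t.
Definition okp (t : seq nat) : bool :=
  [&& size t == 12%N, lt12 t, lt12 (tinv t), all (fun k => k \in t) (iota 0 12) &
      uniq t] && (good t && good (tinv t)).

Lemma nth_lt t j : lt12 t -> (nth 0%N t j < 12)%N.
Proof.
move=> h; case: (ltnP j (size t)) => hj; last by rewrite nth_default.
by move/allP: h; apply; apply: mem_nth.
Qed.

Lemma gmE t (x : vec) j : lt12 t -> (x *m gm t) 0 j = x 0 (inord (nth 0%N t j)).
Proof.
move=> ht; rewrite mxE (bigD1 (inord (nth 0%N t j))) //= big1 ?addr0.
  by rewrite mxE inordK ?nth_lt // eqxx mulr1.
move=> i hi; rewrite mxE; case: eqP => [e|]; last by rewrite mulr0.
by move/eqP: hi; case; apply: val_inj; rewrite /= inordK ?nth_lt.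
Qed.

Lemma half_gm t y : lt12 t -> half y *m gm t = half (reidx t y).
Proof. by move=> ht; apply/matrixP => i j; rewrite (ord1 i) gmE // !halfE mxE. Qed.

Lemma pat_reidx t y : lt12 t -> pat (reidx t y) = permute (pat y) t.
Proof.
move=> ht; apply/eq_in_map => k; rewrite mem_iota /= => hk.
by rewrite mxE inordK // nth_pat ?nth_lt.
Qed.

Lemma nth_permute p t k : (k < 12)%N -> nth false (permute p t) k = nth false p (nth 0%N t k).
Proof. by move=> hk; rewrite (nth_map 0%N) ?size_iota // nth_iota. Qed.

Lemma size_permute p t : size (permute p t) = 12%N.
Proof. by rewrite size_map size_iota. Qed.

Lemma reidx_vof t p : lt12 t -> reidx t (vof p) = vof (permute p t).
Proof.
move=> ht; apply/matrixP => i j; rewrite (ord1 i) !mxE inordK ?nth_lt //.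
by rewrite nth_permute.
Qed.

Lemma good_M t x : lt12 t -> good t -> inM x -> inM (x *m gm t).
Proof.
move=> ht hg /inM_char1 [y [-> /inCP [b1 [b2 e]]]].
rewrite half_gm //; apply: inM_char2; rewrite pat_reidx // e.
by move/allP: hg => /(_ (b1, b2)); apply; clear e; case: b1; case: b2.
Qed.

Lemma gm_comp_id t s (x : vec) : lt12 t -> lt12 s ->
  (forall j, (j < 12)%N -> nth 0%N t (nth 0%N s j) = j) -> x *m gm t *m gm s = x.
Proof.
move=> ht hs h; apply/matrixP => i j; rewrite (ord1 i) gmE // gmE // inordK ?nth_lt //.
by rewrite h // inord_val.
Qed.

Lemma mx_id_rows (A : 'M[rat]_12) : (forall x : vec, x *m A = x) -> A = 1%:M.
Proof.
move=> h; apply/row_matrixP => i.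
by rewrite -{1}(mul1mx A) row_mul h.
Qed.

Lemma gm_iso t : okp t -> isometryM (gm t).
Proof.
case/andP => /and5P [/eqP hs ht hti hmem hu] /andP [hg hgi].
have h1 : forall j, (j < 12)%N -> nth 0%N t (nth 0%N (tinv t) j) = j.
  move=> j hj; rewrite (nth_map 0%N) ?size_iota // nth_iota // add0n.
  by rewrite nth_index //; move/allP: hmem; apply; rewrite mem_iota.
have h2 : forall j, (j < 12)%N -> nth 0%N (tinv t) (nth 0%N t j) = j.
  move=> j hj; rewrite (nth_map 0%N) ?size_iota ?nth_lt // nth_iota ?nth_lt // add0n.
  by rewrite index_uniq // hs.
split.
- have e : gm t *m gm (tinv t) = 1%:M.
    by apply: mx_id_rows => x; rewrite mulmxA gm_comp_id.
  by case: (mulmx1_unit e).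
- move=> x y; rewrite !bfE; congr (_ * _).
  have hinj : injective (fun j : 'I_12 => (inord (nth 0%N t j) : 'I_12)).
    move=> j1 j2 /(congr1 val); rewrite /= !inordK ?nth_lt // => e.
    apply: val_inj; apply/eqP; rewrite -(nth_uniq 0%N _ _ hu) ?hs ?ltn_ord //; by apply/eqP.
  rewrite [RHS](reindex_inj hinj) /=; apply: eq_bigr => j _; by rewrite !gmE.
- by move=> x hx; apply: good_M.
- move=> x hx; exists (x *m gm (tinv t)); split; first by apply: good_M.
  by apply: gm_comp_id.
Qed.

Lemma equiv_gm p t : okp t -> equivA (half (vof p)) (half (vof (permute p t))).
Proof.
move=> ho; exists (gm t); split; first by apply: gm_iso.
have ht : lt12 t by case/andP: ho => /and5P [].
by rewrite half_gm // reidx_vof // subrr; apply: inM0.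
Qed.
Definition patof (s : seq nat) : seq bool := [seq k \in s | k <- iota 0 12].
Definition rp : seq (seq bool) :=
  [:: patof [:: 0; 1; 4; 5]; ones; patof [:: 0; 4; 8]; patof [:: 0; 1; 4; 5; 8; 9];
      patof [:: 0; 1]; patof [:: 0; 4; 8; 9; 10]]%N.
Definition rn (k : nat) : vec := half (vof (nth [::] rp k)).
Definition cards : seq nat := [:: 54; 1; 64; 54; 18; 64]%N.
Definition R : seq (nat * seq nat) := [::
(0%N, [:: 0; 1; 2; 3; 4; 5; 6; 7; 8; 9; 10; 11]);
(0%N, [:: 0; 2; 1; 3; 4; 5; 6; 7; 8; 9; 10; 11]);
(0%N, [:: 0; 1; 2; 3; 4; 6; 5; 7; 8; 9; 10; 11]);
(0%N, [:: 0; 1; 2; 3; 8; 9; 10; 11; 4; 5; 6; 7]);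
(0%N, [:: 2; 0; 1; 3; 4; 5; 6; 7; 8; 9; 10; 11]);
(0%N, [:: 0; 2; 3; 1; 4; 5; 6; 7; 8; 9; 10; 11]);
(0%N, [:: 0; 2; 1; 3; 4; 6; 5; 7; 8; 9; 10; 11]);
(0%N, [:: 0; 2; 1; 3; 8; 9; 10; 11; 4; 5; 6; 7]);
(0%N, [:: 0; 1; 2; 3; 6; 4; 5; 7; 8; 9; 10; 11]);
(0%N, [:: 0; 1; 2; 3; 4; 6; 7; 5; 8; 9; 10; 11]);
(0%N, [:: 0; 1; 2; 3; 8; 9; 10; 11; 4; 6; 5; 7]);
(0%N, [:: 8; 9; 10; 11; 0; 1; 2; 3; 4; 5; 6; 7]);
(0%N, [:: 2; 0; 3; 1; 4; 5; 6; 7; 8; 9; 10; 11]);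
(0%N, [:: 2; 0; 1; 3; 4; 6; 5; 7; 8; 9; 10; 11]);
(0%N, [:: 2; 0; 1; 3; 8; 9; 10; 11; 4; 5; 6; 7]);
(0%N, [:: 0; 2; 3; 1; 4; 6; 5; 7; 8; 9; 10; 11]);
(0%N, [:: 0; 2; 3; 1; 8; 9; 10; 11; 4; 5; 6; 7]);
(0%N, [:: 0; 2; 1; 3; 6; 4; 5; 7; 8; 9; 10; 11]);
(0%N, [:: 0; 2; 1; 3; 4; 6; 7; 5; 8; 9; 10; 11]);
(0%N, [:: 0; 2; 1; 3; 8; 9; 10; 11; 4; 6; 5; 7]);
(0%N, [:: 8; 9; 10; 11; 0; 2; 1; 3; 4; 5; 6; 7]);
(0%N, [:: 0; 1; 2; 3; 6; 4; 7; 5; 8; 9; 10; 11]);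
(0%N, [:: 0; 1; 2; 3; 8; 9; 10; 11; 6; 4; 5; 7]);
(0%N, [:: 0; 1; 2; 3; 8; 9; 10; 11; 4; 6; 7; 5]);
(0%N, [:: 8; 9; 10; 11; 0; 1; 2; 3; 4; 6; 5; 7]);
(0%N, [:: 2; 3; 0; 1; 4; 5; 6; 7; 8; 9; 10; 11]);
(0%N, [:: 2; 0; 3; 1; 4; 6; 5; 7; 8; 9; 10; 11]);
(0%N, [:: 2; 0; 3; 1; 8; 9; 10; 11; 4; 5; 6; 7]);
(0%N, [:: 2; 0; 1; 3; 6; 4; 5; 7; 8; 9; 10; 11]);
(0%N, [:: 2; 0; 1; 3; 4; 6; 7; 5; 8; 9; 10; 11]);
(0%N, [:: 2; 0; 1; 3; 8; 9; 10; 11; 4; 6; 5; 7]);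
(0%N, [:: 8; 9; 10; 11; 2; 0; 1; 3; 4; 5; 6; 7]);
(0%N, [:: 0; 2; 3; 1; 8; 9; 10; 11; 4; 6; 5; 7]);
(0%N, [:: 8; 9; 10; 11; 0; 2; 3; 1; 4; 5; 6; 7]);
(0%N, [:: 0; 2; 1; 3; 8; 9; 10; 11; 6; 4; 5; 7]);
(0%N, [:: 0; 2; 1; 3; 8; 9; 10; 11; 4; 6; 7; 5]);
(0%N, [:: 8; 9; 10; 11; 0; 2; 1; 3; 4; 6; 5; 7]);
(0%N, [:: 0; 1; 2; 3; 8; 9; 10; 11; 6; 4; 7; 5]);
(0%N, [:: 8; 9; 10; 11; 0; 1; 2; 3; 6; 4; 5; 7]);
(0%N, [:: 8; 9; 10; 11; 0; 1; 2; 3; 4; 6; 7; 5]);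
(0%N, [:: 2; 3; 0; 1; 8; 9; 10; 11; 4; 5; 6; 7]);
(0%N, [:: 2; 0; 3; 1; 8; 9; 10; 11; 4; 6; 5; 7]);
(0%N, [:: 8; 9; 10; 11; 2; 0; 3; 1; 4; 5; 6; 7]);
(0%N, [:: 2; 0; 1; 3; 8; 9; 10; 11; 6; 4; 5; 7]);
(0%N, [:: 2; 0; 1; 3; 8; 9; 10; 11; 4; 6; 7; 5]);
(0%N, [:: 8; 9; 10; 11; 2; 0; 1; 3; 4; 6; 5; 7]);
(0%N, [:: 8; 9; 10; 11; 0; 2; 3; 1; 4; 6; 5; 7]);
(0%N, [:: 8; 9; 10; 11; 0; 2; 1; 3; 6; 4; 5; 7]);
(0%N, [:: 8; 9; 10; 11; 0; 2; 1; 3; 4; 6; 7; 5]);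
(0%N, [:: 8; 9; 10; 11; 0; 1; 2; 3; 6; 4; 7; 5]);
(0%N, [:: 8; 9; 10; 11; 2; 3; 0; 1; 4; 5; 6; 7]);
(0%N, [:: 8; 9; 10; 11; 2; 0; 3; 1; 4; 6; 5; 7]);
(0%N, [:: 8; 9; 10; 11; 2; 0; 1; 3; 6; 4; 5; 7]);
(0%N, [:: 8; 9; 10; 11; 2; 0; 1; 3; 4; 6; 7; 5]);
(1%N, [:: 0; 1; 2; 3; 4; 5; 6; 7; 8; 9; 10; 11]);
(2%N, [:: 0; 1; 2; 3; 4; 5; 6; 7; 8; 9; 10; 11]);
(2%N, [:: 1; 0; 2; 3; 4; 5; 6; 7; 8; 9; 10; 11]);
(2%N, [:: 0; 1; 2; 3; 5; 4; 6; 7; 8; 9; 10; 11]);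
(2%N, [:: 0; 1; 2; 3; 4; 5; 6; 7; 9; 8; 10; 11]);
(2%N, [:: 1; 2; 0; 3; 4; 5; 6; 7; 8; 9; 10; 11]);
(2%N, [:: 1; 0; 2; 3; 5; 4; 6; 7; 8; 9; 10; 11]);
(2%N, [:: 1; 0; 2; 3; 4; 5; 6; 7; 9; 8; 10; 11]);
(2%N, [:: 0; 1; 2; 3; 5; 6; 4; 7; 8; 9; 10; 11]);
(2%N, [:: 0; 1; 2; 3; 5; 4; 6; 7; 9; 8; 10; 11]);
(2%N, [:: 0; 1; 2; 3; 4; 5; 6; 7; 9; 10; 8; 11]);
(2%N, [:: 1; 2; 3; 0; 4; 5; 6; 7; 8; 9; 10; 11]);
(2%N, [:: 1; 2; 0; 3; 5; 4; 6; 7; 8; 9; 10; 11]);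
(2%N, [:: 1; 2; 0; 3; 4; 5; 6; 7; 9; 8; 10; 11]);
(2%N, [:: 1; 0; 2; 3; 5; 6; 4; 7; 8; 9; 10; 11]);
(2%N, [:: 1; 0; 2; 3; 5; 4; 6; 7; 9; 8; 10; 11]);
(2%N, [:: 1; 0; 2; 3; 4; 5; 6; 7; 9; 10; 8; 11]);
(2%N, [:: 0; 1; 2; 3; 5; 6; 7; 4; 8; 9; 10; 11]);
(2%N, [:: 0; 1; 2; 3; 5; 6; 4; 7; 9; 8; 10; 11]);
(2%N, [:: 0; 1; 2; 3; 5; 4; 6; 7; 9; 10; 8; 11]);
(2%N, [:: 0; 1; 2; 3; 4; 5; 6; 7; 9; 10; 11; 8]);
(2%N, [:: 1; 2; 3; 0; 5; 4; 6; 7; 8; 9; 10; 11]);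
(2%N, [:: 1; 2; 3; 0; 4; 5; 6; 7; 9; 8; 10; 11]);
(2%N, [:: 1; 2; 0; 3; 5; 6; 4; 7; 8; 9; 10; 11]);
(2%N, [:: 1; 2; 0; 3; 5; 4; 6; 7; 9; 8; 10; 11]);
(2%N, [:: 1; 2; 0; 3; 4; 5; 6; 7; 9; 10; 8; 11]);
(2%N, [:: 1; 0; 2; 3; 5; 6; 7; 4; 8; 9; 10; 11]);
(2%N, [:: 1; 0; 2; 3; 5; 6; 4; 7; 9; 8; 10; 11]);
(2%N, [:: 1; 0; 2; 3; 5; 4; 6; 7; 9; 10; 8; 11]);
(2%N, [:: 1; 0; 2; 3; 4; 5; 6; 7; 9; 10; 11; 8]);
(2%N, [:: 0; 1; 2; 3; 5; 6; 7; 4; 9; 8; 10; 11]);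
(2%N, [:: 0; 1; 2; 3; 5; 6; 4; 7; 9; 10; 8; 11]);
(2%N, [:: 0; 1; 2; 3; 5; 4; 6; 7; 9; 10; 11; 8]);
(2%N, [:: 1; 2; 3; 0; 5; 6; 4; 7; 8; 9; 10; 11]);
(2%N, [:: 1; 2; 3; 0; 5; 4; 6; 7; 9; 8; 10; 11]);
(2%N, [:: 1; 2; 3; 0; 4; 5; 6; 7; 9; 10; 8; 11]);
(2%N, [:: 1; 2; 0; 3; 5; 6; 7; 4; 8; 9; 10; 11]);
(2%N, [:: 1; 2; 0; 3; 5; 6; 4; 7; 9; 8; 10; 11]);
(2%N, [:: 1; 2; 0; 3; 5; 4; 6; 7; 9; 10; 8; 11]);
(2%N, [:: 1; 2; 0; 3; 4; 5; 6; 7; 9; 10; 11; 8]);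
(2%N, [:: 1; 0; 2; 3; 5; 6; 7; 4; 9; 8; 10; 11]);
(2%N, [:: 1; 0; 2; 3; 5; 6; 4; 7; 9; 10; 8; 11]);
(2%N, [:: 1; 0; 2; 3; 5; 4; 6; 7; 9; 10; 11; 8]);
(2%N, [:: 0; 1; 2; 3; 5; 6; 7; 4; 9; 10; 8; 11]);
(2%N, [:: 0; 1; 2; 3; 5; 6; 4; 7; 9; 10; 11; 8]);
(2%N, [:: 1; 2; 3; 0; 5; 6; 7; 4; 8; 9; 10; 11]);
(2%N, [:: 1; 2; 3; 0; 5; 6; 4; 7; 9; 8; 10; 11]);
(2%N, [:: 1; 2; 3; 0; 5; 4; 6; 7; 9; 10; 8; 11]);
(2%N, [:: 1; 2; 3; 0; 4; 5; 6; 7; 9; 10; 11; 8]);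
(2%N, [:: 1; 2; 0; 3; 5; 6; 7; 4; 9; 8; 10; 11]);
(2%N, [:: 1; 2; 0; 3; 5; 6; 4; 7; 9; 10; 8; 11]);
(2%N, [:: 1; 2; 0; 3; 5; 4; 6; 7; 9; 10; 11; 8]);
(2%N, [:: 1; 0; 2; 3; 5; 6; 7; 4; 9; 10; 8; 11]);
(2%N, [:: 1; 0; 2; 3; 5; 6; 4; 7; 9; 10; 11; 8]);
(2%N, [:: 0; 1; 2; 3; 5; 6; 7; 4; 9; 10; 11; 8]);
(2%N, [:: 1; 2; 3; 0; 5; 6; 7; 4; 9; 8; 10; 11]);
(2%N, [:: 1; 2; 3; 0; 5; 6; 4; 7; 9; 10; 8; 11]);
(2%N, [:: 1; 2; 3; 0; 5; 4; 6; 7; 9; 10; 11; 8]);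
(2%N, [:: 1; 2; 0; 3; 5; 6; 7; 4; 9; 10; 8; 11]);
(2%N, [:: 1; 2; 0; 3; 5; 6; 4; 7; 9; 10; 11; 8]);
(2%N, [:: 1; 0; 2; 3; 5; 6; 7; 4; 9; 10; 11; 8]);
(2%N, [:: 1; 2; 3; 0; 5; 6; 7; 4; 9; 10; 8; 11]);
(2%N, [:: 1; 2; 3; 0; 5; 6; 4; 7; 9; 10; 11; 8]);
(2%N, [:: 1; 2; 0; 3; 5; 6; 7; 4; 9; 10; 11; 8]);
(2%N, [:: 1; 2; 3; 0; 5; 6; 7; 4; 9; 10; 11; 8]);
(3%N, [:: 0; 1; 2; 3; 4; 5; 6; 7; 8; 9; 10; 11]);
(3%N, [:: 0; 2; 1; 3; 4; 5; 6; 7; 8; 9; 10; 11]);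
(3%N, [:: 0; 1; 2; 3; 4; 6; 5; 7; 8; 9; 10; 11]);
(3%N, [:: 0; 1; 2; 3; 4; 5; 6; 7; 8; 10; 9; 11]);
(3%N, [:: 2; 0; 1; 3; 4; 5; 6; 7; 8; 9; 10; 11]);
(3%N, [:: 0; 2; 3; 1; 4; 5; 6; 7; 8; 9; 10; 11]);
(3%N, [:: 0; 2; 1; 3; 4; 6; 5; 7; 8; 9; 10; 11]);
(3%N, [:: 0; 2; 1; 3; 4; 5; 6; 7; 8; 10; 9; 11]);
(3%N, [:: 0; 1; 2; 3; 6; 4; 5; 7; 8; 9; 10; 11]);
(3%N, [:: 0; 1; 2; 3; 4; 6; 7; 5; 8; 9; 10; 11]);
(3%N, [:: 0; 1; 2; 3; 4; 6; 5; 7; 8; 10; 9; 11]);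
(3%N, [:: 0; 1; 2; 3; 4; 5; 6; 7; 10; 8; 9; 11]);
(3%N, [:: 0; 1; 2; 3; 4; 5; 6; 7; 8; 10; 11; 9]);
(3%N, [:: 2; 0; 3; 1; 4; 5; 6; 7; 8; 9; 10; 11]);
(3%N, [:: 2; 0; 1; 3; 4; 6; 5; 7; 8; 9; 10; 11]);
(3%N, [:: 2; 0; 1; 3; 4; 5; 6; 7; 8; 10; 9; 11]);
(3%N, [:: 0; 2; 3; 1; 4; 6; 5; 7; 8; 9; 10; 11]);
(3%N, [:: 0; 2; 3; 1; 4; 5; 6; 7; 8; 10; 9; 11]);
(3%N, [:: 0; 2; 1; 3; 6; 4; 5; 7; 8; 9; 10; 11]);
(3%N, [:: 0; 2; 1; 3; 4; 6; 7; 5; 8; 9; 10; 11]);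
(3%N, [:: 0; 2; 1; 3; 4; 6; 5; 7; 8; 10; 9; 11]);
(3%N, [:: 0; 2; 1; 3; 4; 5; 6; 7; 10; 8; 9; 11]);
(3%N, [:: 0; 2; 1; 3; 4; 5; 6; 7; 8; 10; 11; 9]);
(3%N, [:: 0; 1; 2; 3; 6; 4; 7; 5; 8; 9; 10; 11]);
(3%N, [:: 0; 1; 2; 3; 6; 4; 5; 7; 8; 10; 9; 11]);
(3%N, [:: 0; 1; 2; 3; 4; 6; 7; 5; 8; 10; 9; 11]);
(3%N, [:: 0; 1; 2; 3; 4; 6; 5; 7; 10; 8; 9; 11]);
(3%N, [:: 0; 1; 2; 3; 4; 6; 5; 7; 8; 10; 11; 9]);
(3%N, [:: 0; 1; 2; 3; 4; 5; 6; 7; 10; 8; 11; 9]);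
(3%N, [:: 2; 3; 0; 1; 4; 5; 6; 7; 8; 9; 10; 11]);
(3%N, [:: 2; 0; 3; 1; 4; 6; 5; 7; 8; 9; 10; 11]);
(3%N, [:: 2; 0; 3; 1; 4; 5; 6; 7; 8; 10; 9; 11]);
(3%N, [:: 2; 0; 1; 3; 6; 4; 5; 7; 8; 9; 10; 11]);
(3%N, [:: 2; 0; 1; 3; 4; 6; 7; 5; 8; 9; 10; 11]);
(3%N, [:: 2; 0; 1; 3; 4; 6; 5; 7; 8; 10; 9; 11]);
(3%N, [:: 2; 0; 1; 3; 4; 5; 6; 7; 10; 8; 9; 11]);
(3%N, [:: 2; 0; 1; 3; 4; 5; 6; 7; 8; 10; 11; 9]);
(3%N, [:: 0; 2; 3; 1; 4; 6; 5; 7; 8; 10; 9; 11]);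
(3%N, [:: 0; 2; 1; 3; 6; 4; 5; 7; 8; 10; 9; 11]);
(3%N, [:: 0; 2; 1; 3; 4; 6; 7; 5; 8; 10; 9; 11]);
(3%N, [:: 0; 2; 1; 3; 4; 6; 5; 7; 10; 8; 9; 11]);
(3%N, [:: 0; 2; 1; 3; 4; 6; 5; 7; 8; 10; 11; 9]);
(3%N, [:: 0; 1; 2; 3; 6; 4; 7; 5; 8; 10; 9; 11]);
(3%N, [:: 0; 1; 2; 3; 6; 4; 5; 7; 10; 8; 9; 11]);
(3%N, [:: 0; 1; 2; 3; 6; 4; 5; 7; 8; 10; 11; 9]);
(3%N, [:: 2; 0; 3; 1; 4; 6; 5; 7; 8; 10; 9; 11]);
(3%N, [:: 2; 0; 1; 3; 6; 4; 5; 7; 8; 10; 9; 11]);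
(3%N, [:: 2; 0; 1; 3; 4; 6; 7; 5; 8; 10; 9; 11]);
(3%N, [:: 2; 0; 1; 3; 4; 6; 5; 7; 10; 8; 9; 11]);
(3%N, [:: 2; 0; 1; 3; 4; 6; 5; 7; 8; 10; 11; 9]);
(3%N, [:: 0; 2; 1; 3; 6; 4; 5; 7; 10; 8; 9; 11]);
(3%N, [:: 0; 2; 1; 3; 6; 4; 5; 7; 8; 10; 11; 9]);
(3%N, [:: 2; 0; 1; 3; 6; 4; 5; 7; 10; 8; 9; 11]);
(3%N, [:: 2; 0; 1; 3; 6; 4; 5; 7; 8; 10; 11; 9]);
(4%N, [:: 0; 1; 2; 3; 4; 5; 6; 7; 8; 9; 10; 11]);
(4%N, [:: 0; 2; 1; 3; 4; 5; 6; 7; 8; 9; 10; 11]);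
(4%N, [:: 4; 5; 6; 7; 0; 1; 2; 3; 8; 9; 10; 11]);
(4%N, [:: 2; 0; 1; 3; 4; 5; 6; 7; 8; 9; 10; 11]);
(4%N, [:: 0; 2; 3; 1; 4; 5; 6; 7; 8; 9; 10; 11]);
(4%N, [:: 4; 5; 6; 7; 0; 2; 1; 3; 8; 9; 10; 11]);
(4%N, [:: 4; 5; 6; 7; 8; 9; 10; 11; 0; 1; 2; 3]);
(4%N, [:: 2; 0; 3; 1; 4; 5; 6; 7; 8; 9; 10; 11]);
(4%N, [:: 4; 5; 6; 7; 2; 0; 1; 3; 8; 9; 10; 11]);
(4%N, [:: 4; 5; 6; 7; 0; 2; 3; 1; 8; 9; 10; 11]);
(4%N, [:: 4; 5; 6; 7; 8; 9; 10; 11; 0; 2; 1; 3]);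
(4%N, [:: 2; 3; 0; 1; 4; 5; 6; 7; 8; 9; 10; 11]);
(4%N, [:: 4; 5; 6; 7; 2; 0; 3; 1; 8; 9; 10; 11]);
(4%N, [:: 4; 5; 6; 7; 8; 9; 10; 11; 2; 0; 1; 3]);
(4%N, [:: 4; 5; 6; 7; 8; 9; 10; 11; 0; 2; 3; 1]);
(4%N, [:: 4; 5; 6; 7; 2; 3; 0; 1; 8; 9; 10; 11]);
(4%N, [:: 4; 5; 6; 7; 8; 9; 10; 11; 2; 0; 3; 1]);
(4%N, [:: 4; 5; 6; 7; 8; 9; 10; 11; 2; 3; 0; 1]);
(5%N, [:: 0; 1; 2; 3; 4; 5; 6; 7; 8; 9; 10; 11]);
(5%N, [:: 1; 0; 2; 3; 4; 5; 6; 7; 8; 9; 10; 11]);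
(5%N, [:: 0; 1; 2; 3; 5; 4; 6; 7; 8; 9; 10; 11]);
(5%N, [:: 0; 1; 2; 3; 4; 5; 6; 7; 8; 9; 11; 10]);
(5%N, [:: 0; 1; 2; 3; 8; 9; 10; 11; 4; 5; 6; 7]);
(5%N, [:: 1; 2; 0; 3; 4; 5; 6; 7; 8; 9; 10; 11]);
(5%N, [:: 1; 0; 2; 3; 5; 4; 6; 7; 8; 9; 10; 11]);
(5%N, [:: 1; 0; 2; 3; 4; 5; 6; 7; 8; 9; 11; 10]);
(5%N, [:: 1; 0; 2; 3; 8; 9; 10; 11; 4; 5; 6; 7]);
(5%N, [:: 0; 1; 2; 3; 5; 6; 4; 7; 8; 9; 10; 11]);
(5%N, [:: 0; 1; 2; 3; 5; 4; 6; 7; 8; 9; 11; 10]);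
(5%N, [:: 0; 1; 2; 3; 8; 9; 10; 11; 5; 4; 6; 7]);
(5%N, [:: 0; 1; 2; 3; 4; 5; 6; 7; 8; 11; 9; 10]);
(5%N, [:: 0; 1; 2; 3; 8; 9; 11; 10; 4; 5; 6; 7]);
(5%N, [:: 8; 9; 10; 11; 0; 1; 2; 3; 4; 5; 6; 7]);
(5%N, [:: 1; 2; 3; 0; 4; 5; 6; 7; 8; 9; 10; 11]);
(5%N, [:: 1; 2; 0; 3; 5; 4; 6; 7; 8; 9; 10; 11]);
(5%N, [:: 1; 2; 0; 3; 4; 5; 6; 7; 8; 9; 11; 10]);
(5%N, [:: 1; 2; 0; 3; 8; 9; 10; 11; 4; 5; 6; 7]);
(5%N, [:: 1; 0; 2; 3; 5; 6; 4; 7; 8; 9; 10; 11]);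
(5%N, [:: 1; 0; 2; 3; 5; 4; 6; 7; 8; 9; 11; 10]);
(5%N, [:: 1; 0; 2; 3; 8; 9; 10; 11; 5; 4; 6; 7]);
(5%N, [:: 1; 0; 2; 3; 4; 5; 6; 7; 8; 11; 9; 10]);
(5%N, [:: 1; 0; 2; 3; 8; 9; 11; 10; 4; 5; 6; 7]);
(5%N, [:: 8; 9; 10; 11; 1; 0; 2; 3; 4; 5; 6; 7]);
(5%N, [:: 0; 1; 2; 3; 5; 6; 7; 4; 8; 9; 10; 11]);
(5%N, [:: 0; 1; 2; 3; 5; 6; 4; 7; 8; 9; 11; 10]);
(5%N, [:: 0; 1; 2; 3; 8; 9; 10; 11; 5; 6; 4; 7]);
(5%N, [:: 0; 1; 2; 3; 5; 4; 6; 7; 8; 11; 9; 10]);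
(5%N, [:: 0; 1; 2; 3; 8; 9; 11; 10; 5; 4; 6; 7]);
(5%N, [:: 8; 9; 10; 11; 0; 1; 2; 3; 5; 4; 6; 7]);
(5%N, [:: 0; 1; 2; 3; 4; 5; 6; 7; 11; 8; 9; 10]);
(5%N, [:: 0; 1; 2; 3; 8; 11; 9; 10; 4; 5; 6; 7]);
(5%N, [:: 8; 9; 11; 10; 0; 1; 2; 3; 4; 5; 6; 7]);
(5%N, [:: 1; 2; 3; 0; 5; 4; 6; 7; 8; 9; 10; 11]);
(5%N, [:: 1; 2; 3; 0; 4; 5; 6; 7; 8; 9; 11; 10]);
(5%N, [:: 1; 2; 3; 0; 8; 9; 10; 11; 4; 5; 6; 7]);
(5%N, [:: 1; 2; 0; 3; 5; 6; 4; 7; 8; 9; 10; 11]);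
(5%N, [:: 1; 2; 0; 3; 5; 4; 6; 7; 8; 9; 11; 10]);
(5%N, [:: 1; 2; 0; 3; 8; 9; 10; 11; 5; 4; 6; 7]);
(5%N, [:: 1; 2; 0; 3; 4; 5; 6; 7; 8; 11; 9; 10]);
(5%N, [:: 1; 2; 0; 3; 8; 9; 11; 10; 4; 5; 6; 7]);
(5%N, [:: 8; 9; 10; 11; 1; 2; 0; 3; 4; 5; 6; 7]);
(5%N, [:: 1; 0; 2; 3; 5; 6; 7; 4; 8; 9; 10; 11]);
(5%N, [:: 1; 0; 2; 3; 5; 6; 4; 7; 8; 9; 11; 10]);
(5%N, [:: 1; 0; 2; 3; 8; 9; 10; 11; 5; 6; 4; 7]);
(5%N, [:: 1; 0; 2; 3; 5; 4; 6; 7; 8; 11; 9; 10]);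
(5%N, [:: 1; 0; 2; 3; 8; 9; 11; 10; 5; 4; 6; 7]);
(5%N, [:: 8; 9; 10; 11; 1; 0; 2; 3; 5; 4; 6; 7]);
(5%N, [:: 1; 0; 2; 3; 4; 5; 6; 7; 11; 8; 9; 10]);
(5%N, [:: 1; 0; 2; 3; 8; 11; 9; 10; 4; 5; 6; 7]);
(5%N, [:: 8; 9; 11; 10; 1; 0; 2; 3; 4; 5; 6; 7]);
(5%N, [:: 1; 2; 3; 0; 5; 6; 4; 7; 8; 9; 10; 11]);
(5%N, [:: 1; 2; 3; 0; 5; 4; 6; 7; 8; 9; 11; 10]);
(5%N, [:: 1; 2; 3; 0; 8; 9; 10; 11; 5; 4; 6; 7]);
(5%N, [:: 1; 2; 0; 3; 5; 6; 7; 4; 8; 9; 10; 11]);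
(5%N, [:: 1; 2; 0; 3; 5; 6; 4; 7; 8; 9; 11; 10]);
(5%N, [:: 1; 2; 0; 3; 8; 9; 10; 11; 5; 6; 4; 7]);
(5%N, [:: 1; 2; 0; 3; 5; 4; 6; 7; 8; 11; 9; 10]);
(5%N, [:: 1; 2; 0; 3; 8; 9; 11; 10; 5; 4; 6; 7]);
(5%N, [:: 8; 9; 10; 11; 1; 2; 0; 3; 5; 4; 6; 7]);
(5%N, [:: 1; 2; 3; 0; 5; 6; 7; 4; 8; 9; 10; 11]);
(5%N, [:: 1; 2; 3; 0; 5; 6; 4; 7; 8; 9; 11; 10]);
(5%N, [:: 1; 2; 3; 0; 8; 9; 10; 11; 5; 6; 4; 7])].
Definition Ri (i : nat) : seq (seq nat) := [seq e.2 | e <- R & e.1 == i].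
Fixpoint allseqs (n : nat) : seq (seq bool) :=
  if n is n'.+1 then [seq false :: s | s <- allseqs n'] ++ [seq true :: s | s <- allseqs n']
  else [:: [::]].
Definition chk_ok : bool := all (fun e => (e.1 < 6)%N && okp e.2) R.
Definition chk_cover : bool :=
  let qs := [seq permute (nth [::] rp e.1) e.2 | e <- R] in
  all (fun p => (perp p && ~~ inC p) ==> has (fun q => inC (xorp q p)) qs) (allseqs 12).
Definition chk_card : bool := all (fun i => size (Ri i) == nth 0%N cards i) (iota 0 6).
Definition chk_dist : bool :=
  all (fun i => let L := [seq permute (nth [::] rp i) t | t <- Ri i] in
    all (fun k => all (fun l => inC (xorp (nth [::] L k) (nth [::] L l)) ==> (k == l))
       (iota 0 (size L))) (iota 0 (size L))) (iota 0 6).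
Definition chk_rp : bool := all (fun p => (size p == 12%N) && perp p && ~~ inC p) rp.
Lemma chk_ok_T : chk_ok. Proof. by vm_compute. Qed.
Lemma chk_cover_T : chk_cover. Proof. by vm_compute. Qed.
Lemma chk_card_T : chk_card. Proof. by vm_compute. Qed.
Lemma chk_dist_T : chk_dist. Proof. by vm_compute. Qed.
Lemma chk_rp_T : chk_rp. Proof. by vm_compute. Qed.
Opaque R.
Lemma mem_allseqs s : s \in allseqs (size s).
Proof.
elim: s => [|b s IH] //=; rewrite mem_cat.
by case: b; [rewrite (map_f (cons true)) ?orbT | rewrite (map_f (cons false))].
Qed.

Lemma rp_facts k : (k < 6)%N ->
  [/\ size (nth [::] rp k) = 12%N, perp (nth [::] rp k) & ~~ inC (nth [::] rp k)].
Proof.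
move=> hk; have := chk_rp_T; rewrite /chk_rp => /allP /(_ (nth [::] rp k)).
by rewrite mem_nth // => /(_ isT) /andP [/andP [/eqP -> ->] ->].
Qed.

Lemma rn_dual k : (k < 6)%N -> inDual (rn k).
Proof. by move=> hk; case: (rp_facts hk) => hs hp _; apply: dual_char2; rewrite pat_vof. Qed.

Lemma rn_notM k : (k < 6)%N -> ~ inM (rn k).
Proof. by move=> hk; case: (rp_facts hk) => hs _ hc; apply: notM_vof. Qed.

Lemma R_ok e : e \in R -> (e.1 < 6)%N /\ okp e.2.
Proof. by move=> he; have := chk_ok_T; rewrite /chk_ok => /allP /(_ e he) /andP. Qed.

Lemma iso_back g x : isometryM g -> inM (x *m g) -> inM x.
Proof. by move=> hg /(iso_Minv hg); rewrite mulmxK ?iso_unit. Qed.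

Lemma cover x : inDual x -> ~ inM x ->
  exists e, e \in R /\ inM (half (vof (permute (nth [::] rp e.1) e.2)) - x).
Proof.
move=> /dual_char1 [y [-> hp]] hnM.
have hC : ~~ inC (pat y) by apply/negP => /inM_char2.
have hmem : pat y \in allseqs 12 by have := mem_allseqs (pat y); rewrite size_pat.
have := chk_cover_T; rewrite /chk_cover => /allP /(_ (pat y) hmem) /implyP.
rewrite hp hC => /(_ isT) /hasP [q /mapP [e he ->] hq]; exists e; split=> //.
by rewrite halfB; apply: inM_char2; rewrite pat_sub pat_vof ?size_permute.
Qed.

Lemma notChar0 : ~ Char (rn 0).
Proof.
move/(_ (rn 2) (rn_dual (isT : (2 < 6)%N))); rewrite /rn !bf_vof => /isZP/eqP.
by vm_compute.
Qed.

Lemma no_norm3 m : inM m -> bf (rn 3 + m) (rn 3 + m) <> -1.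
Proof. by apply: no_norm; vm_compute. Qed.

Lemma norm4 : bf (rn 4 + 0) (rn 4 + 0) = -1.
Proof. by rewrite addr0 /rn bf_vof; apply/eqP; vm_compute. Qed.

Lemma qdiff i j : (j < 6)%N -> equivA (rn i) (rn j) ->
  denq ((bf (rn j) (rn j) - bf (rn i) (rn i)) / 2) == 1.
Proof. by move=> hj E; apply/eqP/isZP; apply: q_inv => //; apply: rn_dual. Qed.

Lemma distinct i j : (i < 6)%N -> (j < 6)%N -> equivA (rn i) (rn j) -> i = j.
Proof.
move=> hi hj E.
have Q := qdiff hj E.
have E' := equivA_sym E.
move: hi hj E E' Q.
case: i => [|[|[|[|[|[|i]]]]]] // _; case: j => [|[|[|[|[|[|j]]]]]] // _ E E' Q;
  rewrite /rn !bf_vof in Q; try (by vm_compute in Q); try reflexivity.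
- by case: notChar0; apply: (Char_inv E'); apply: Char_u.
- by case: notChar0; apply: (Char_inv E); apply: Char_u.
- have [m [hm h]] := N_inv E' inM0 norm4; case: (no_norm3 hm h).
- have [m [hm h]] := N_inv E inM0 norm4; case: (no_norm3 hm h).
Qed.
Lemma rn_gm i t : (i < 6)%N -> okp t ->
  half (vof (permute (nth [::] rp i) t)) = rn i *m gm t.
Proof.
move=> hi ho; have ht : lt12 t by case/andP: ho => /and5P [].
by rewrite /rn half_gm // reidx_vof.
Qed.

Lemma Ri_ok i t : t \in Ri i -> exists e, [/\ e \in R, e.1 = i & e.2 = t].
Proof.
case/mapP => e; rewrite mem_filter => /andP [/eqP h1 he] ->.
by exists e.
Qed.

Lemma cardA_gen i : (i < 6)%N ->
  cardA (fun x => inDual x /\ equivA (rn i) x) (size (Ri i)).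
Proof.
move=> hi.
exists (fun k : 'I_(size (Ri i)) => half (vof (permute (nth [::] rp i) (nth [::] (Ri i) k)))).
split.
- move=> k; have := Ri_ok (mem_nth [::] (ltn_ord k)) => -[e [he h1 h2]].
  have [_ ho] := R_ok he; rewrite -h2.
  split; last by apply: equiv_gm.
  by rewrite rn_gm //; apply: dual_iso; [apply: gm_iso | apply: rn_dual].
- move=> k l; rewrite halfB => /inM_char1 [y [/half_inj <-]].
  rewrite pat_sub !pat_vof ?size_permute // => hC.
  have := chk_dist_T; rewrite /chk_dist => /allP /(_ i); rewrite mem_iota hi => /(_ isT).
  rewrite size_map => /allP /(_ k); rewrite mem_iota ltn_ord => /(_ isT).
  move=> /allP /(_ l); rewrite mem_iota ltn_ord => /(_ isT).
  rewrite !(nth_map [::]) ?ltn_ord // hC => /eqP h; by apply: val_inj.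
- move=> x [hx E].
  have hnM : ~ inM x.
    move=> hxM; case: E => g [hg hm]; apply: (rn_notM hi).
    by apply: (iso_back hg); have := inMD hm hxM; rewrite subrK.
  have [e [he hM]] := cover hx hnM.
  have [h6 ho] := R_ok he.
  have E2 : equivA (rn e.1) x by apply: (equivA_M _ hM); exact: equiv_gm ho.
  have ei : i = e.1 by apply: distinct => //; apply: (equivA_trans E); apply: equivA_sym.
  have hin : e.2 \in Ri i by apply: map_f; rewrite mem_filter ei eqxx he.
  have hk : (index e.2 (Ri i) < size (Ri i))%N by rewrite index_mem.
  exists (Ordinal hk) => /=; rewrite nth_index //.
  rewrite -ei in hM; by rewrite -opprB; apply: inMN.
Qed.
Lemma order_rn k : (k < 6)%N -> orderA (rn k) 2.
Proof.
move=> hk; split=> //.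
- exists (vof (nth [::] rp k)), 0, 0.
  rewrite (_ : (0:int)%:~R = 0 :> rat) // !scale0r !addr0.
  by apply/matrixP => a b; rewrite !mxE; field.
- move=> j /andP [h0 h2]; have -> : j = 1%N by lia.
  by rewrite scale1r; apply: rn_notM.
Qed.

Lemma card_rn k : (k < 6)%N -> size (Ri k) = nth 0%N cards k.
Proof.
move=> hk; have := chk_card_T; rewrite /chk_card => /allP /(_ k).
by rewrite mem_iota hk => /(_ isT) /eqP.
Qed.

Theorem proposition3p6 :
  exists r : 'I_6 -> 'rV[rat]_12,
    [/\ (forall i, inDual (r i) /\ ~ inM (r i)),
        (forall x, inDual x -> ~ inM x -> exists i, equivA (r i) x),
        (forall i j, equivA (r i) (r j) -> i = j) &
        (forall i : 'I_6,
           let t := nth (0%N, 0, 0%N) M22_table i in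
           [/\ orderA (r i) t.1.1, qA (r i) t.1.2 &
               cardA (fun x => inDual x /\ equivA (r i) x) t.2])].
Proof.
exists (fun i => rn i); split.
- move=> i; split; [apply: rn_dual | apply: rn_notM]; apply: ltn_ord.
- move=> x hx hnx; have [e [he hM]] := cover hx hnx; have [h6 ho] := R_ok he.
  exists (Ordinal h6) => /=; apply: (equivA_M _ hM); exact: equiv_gm ho.
- move=> i j /distinct h; apply: val_inj; apply: h; apply: ltn_ord.
- move=> [k hk]; have hc := cardA_gen hk; have ho := order_rn hk.
  rewrite (card_rn hk) in hc.
  case: k hk hc ho => [|[|[|[|[|[|k]]]]]] hk //= hc ho; split=> //;
    rewrite /qA /rn bf_vof; apply/isZP; apply/eqP; by vm_compute.
Qed.
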